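(* Let $n=p^{\alpha}q^{\beta}$ where $p,q$ are distinct primes and $\alpha,\beta\geq 1$ are integers. Then $\mathbb{AG}(\mathbb{Z}_n)$ has no induced cycle of odd length greater than $3$.
   Context: For a commutative ring $R$ with unity, the annihilating-ideal graph $\mathbb{AG}(R)$ is the simple graph whose vertex set is the set of all non-zero ideals of $R$ with non-zero annihilator, two distinct vertices $I,J$ being adjacent if and only if $IJ=0$. An induced cycle is an induced subgraph isomorphic to a cycle. *)

(* Defs.v *)
From mathcomp Require Import all_boot all_order all_algebra.
Set Implicit Arguments. Unset Strict Implicit. Unset Printing Implicit Defensive.
Import GRing.Theory.
Local Open Scope ring_scope.

Definition is_ideal (R : finComNzRingType) (I : {set R}) : bool :=
  [&& (0 : R) \in I,
      [forall x in I, forall y in I, x + y \in I] &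
      [forall r : R, forall x in I, r * x \in I]].

Definition nonzero_ann (R : finComNzRingType) (I : {set R}) : bool :=
  [exists r : R, (r != 0) && [forall x in I, r * x == 0]].

Definition AG_vertex (R : finComNzRingType) (I : {set R}) : bool :=
  [&& is_ideal I, I != [set 0 : R] & nonzero_ann I].

(* adjacency: I <> J and IJ = 0, i.e. every product x*y (x in I, y in J) is 0
   (IJ is the ideal generated by such products) *)
Definition AG_adj (R : finComNzRingType) (I J : {set R}) : bool :=
  (I != J) && [forall x in I, forall y in J, x * y == 0].

Definition AG_induced_cycle (R : finComNzRingType) (k : nat)
    (f : 'I_k -> {set R}) : Prop :=
  [/\ (3 <= k)%N, injective f, (forall i, AG_vertex (f i)) &
      forall i j : 'I_k,
        AG_adj (f i) (f j) = (((i.+1 %% k)%N == j) || ((j.+1 %% k)%N == i))].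

(* Main.v *)
Require Import Defs.
From mathcomp Require Import all_boot all_order all_algebra.
From mathcomp Require Import zify.
Import GRing.Theory.

Definition Dv (p a x y : nat) : bool := (p ^ a %| x * y)%N.

Lemma four_pt p a s u v t : prime p -> Dv p a s u -> Dv p a v t ->
  ~~ Dv p a u v -> Dv p a s t.
Proof.
move=> pp; rewrite /Dv.
have [->|u0] := posnP u; first by rewrite ?mul0n ?muln0 dvdn0.
have [->|v0] := posnP v; first by rewrite ?mul0n ?muln0 dvdn0.
have [->|s0] := posnP s; first by rewrite ?mul0n ?muln0 dvdn0.
have [->|t0] := posnP t; first by rewrite ?mul0n ?muln0 dvdn0.
rewrite !pfactor_dvdn ?muln_gt0 ?s0 ?u0 ?v0 ?t0 //.
rewrite !lognM //.
lia.
Qed.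

Definition AS (n p a : nat) (X Y : {set 'Z_n}) : bool :=
  [forall u in X, forall v in Y, Dv p a u v].

Lemma AS4 n p a X Y Z W : prime p -> AS n p a X Y -> AS n p a Z W ->
  ~~ AS n p a Y Z -> AS n p a X W.
Proof.
move=> pp HXY HZW /forall_inPn [u uY /forall_inPn [v vZ nuv]].
apply/forall_inP => s sX; apply/forall_inP => t tW.
apply: (@four_pt p a s u v t pp _ _ nuv).
  exact: (forall_inP (forall_inP HXY s sX) u uY).
exact: (forall_inP (forall_inP HZW v vZ) t tW).
Qed.

Lemma ASC n p a X Y : AS n p a X Y = AS n p a Y X.
Proof.
apply/forall_inP/forall_inP => H x xX; apply/forall_inP => y yY;
  rewrite /Dv mulnC; exact: (forall_inP (H y yY) x xX).
Qed.

Lemma valZmul m (h : (1 < m)%N) (x y : 'Z_m) :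
  nat_of_ord (x * y)%R = ((x * y)%N %% m)%N.
Proof. by case: m h x y => [|[|m]]. Qed.

Lemma elem0 p q a b (x y : 'Z_(p ^ a * q ^ b)) :
  prime p -> prime q -> p != q -> (0 < a)%N -> (0 < b)%N ->
  ((x * y)%R == 0%R) = Dv p a x y && Dv q b x y.
Proof.
move=> pp qq pq a0 b0.
have n1 : (1 < p ^ a * q ^ b)%N.
  have p1 := prime_gt1 pp; have q1 := prime_gt1 qq.
  have : (1 < p ^ a)%N by rewrite -(exp1n a) ltn_exp2r.
  have : (0 < q ^ b)%N by rewrite expn_gt0 ltnW.
  lia.
have cop : coprime (p ^ a) (q ^ b).
  by rewrite coprime_pexpl // coprime_pexpr // prime_coprime // dvdn_prime2.
rewrite /Dv -Gauss_dvd //.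
have E := @valZmul _ n1 x y.
apply/eqP/idP => [H | H].
  by have := congr1 (@nat_of_ord _) H; rewrite E /dvdn => ->.
apply: ord_inj; rewrite E; exact/eqP.
Qed.

Lemma prod0E p q a b (X Y : {set 'Z_(p ^ a * q ^ b)}) :
  prime p -> prime q -> p != q -> (0 < a)%N -> (0 < b)%N ->
  [forall x in X, forall y in Y, (x * y)%R == 0%R] =
  AS _ p a X Y && AS _ q b X Y.
Proof.
move=> pp qq pq a0 b0.
have E x y := @elem0 p q a b x y pp qq pq a0 b0.
apply/idP/andP => [/forall_inP H|[HA HB]].
  split; apply/forall_inP=> x xX; apply/forall_inP => y yY;
    have := forall_inP (H x xX) y yY; rewrite E => /andP[].
    by [].
  by [].
apply/forall_inP=> x xX; apply/forall_inP=> y yY.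
by rewrite E (forall_inP (forall_inP HA x xX) y yY) (forall_inP (forall_inP HB x xX) y yY).
Qed.

Theorem lemma6 (p q alpha beta : nat) :
  prime p -> prime q -> p != q -> (0 < alpha)%N -> (0 < beta)%N ->
  forall k : nat, odd k -> (3 < k)%N ->
  ~ exists f : 'I_k -> {set 'Z_(p ^ alpha * q ^ beta)}, AG_induced_cycle f.
Proof.
move=> pp qq pq a0 b0 k ko k3 [f [_ finj _ fadj]].
have k0 : (0 < k)%N by lia.
pose v m := f (Ordinal (ltn_pmod m k0)).
have adjE (X Y : {set 'Z_(p ^ alpha * q ^ beta)}) : AG_adj X Y = (X != Y) && (AS _ p alpha X Y && AS _ q beta X Y).
  by rewrite /AG_adj; congr (_ && _); apply: prod0E.
have vk m : v (k + m)%N = v m.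
  by rewrite /v; congr f; apply: val_inj; rewrite /= modnDl.
have modS m : ((m %% k).+1 %% k = m.+1 %% k)%N.
  by rewrite -addn1 modnDml addn1.
have edge m : AS _ p alpha (v m) (v m.+1) && AS _ q beta (v m) (v m.+1).
  have := fadj (Ordinal (ltn_pmod m k0)) (Ordinal (ltn_pmod m.+1 k0)).
  rewrite /= modS eqxx orTb adjE => /andP[_ ->] //.
have nonedge m : ~~ (AS _ p alpha (v m) (v m.+2) && AS _ q beta (v m) (v m.+2)).
  have := fadj (Ordinal (ltn_pmod m k0)) (Ordinal (ltn_pmod m.+2 k0)).
  have h1 : (m.+1 %% k == m.+2 %% k)%N = false.
    rewrite -(addn2 m) -(addn1 m) eqn_modDl !modn_small //; lia.
  have h2 : (m.+3 %% k == m %% k)%N = false.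
    rewrite -[m.+3]addn3 -{2}[m]addn0 eqn_modDl !modn_small //; lia.
  have h0 : v m != v m.+2.
    apply/negP => /eqP /finj /(congr1 (@nat_of_ord _)) /= /eqP.
    rewrite -[m.+2]addn2 -{1}[m]addn0 eqn_modDl !modn_small //; lia.
  rewrite /= !modS h1 h2 /= adjE h0 /=.
  by move=> ->.
pose T m := AS _ p alpha (v m) (v m.+2).
have step m : T m.+1 = ~~ T m.
  rewrite /T; case: (boolP (AS _ p alpha (v m) (v m.+2))) => H /=.
    apply/negP => H1.
    have /andP[_ B1] := edge m.+2.
    have /andP[_ B2] := edge m.
    have := nonedge m.+1; rewrite H1 /=.
    have := nonedge m; rewrite H /= => nB.
    rewrite ASC in B2.
    by rewrite (@AS4 _ _ _ _ _ _ _ qq B2 B1 nB).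
  have /andP[A1 _] := edge m.+2.
  have /andP[A2 _] := edge m.
  rewrite ASC in A2.
  exact: (@AS4 _ _ _ _ _ _ _ pp A2 A1 H).
have Tm m : T m = T 0 (+) odd m.
  elim: m => [|m IH]; first by rewrite addbF.
  by rewrite step IH /= addbN.
have e1 := vk 0%N; rewrite addn0 in e1.
have e2 := vk 2%N; rewrite addn2 in e2.
have := Tm k; rewrite /T e1 e2 ko addbT.
by case: (AS _ _ _ _ _).
Qed.
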